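(* For all $x\in\mathbb{C}$ and all integers $n\ge0$, \[ \sum_{k=0}^n x^k\big(3L_{4k}+(7x-2)F_{4k+4}\big)=7x^{n+1}F_{4n+4} \] and \[ \sum_{k=0}^n x^k\big(15F_{4k}+(7x-2)L_{4k+4}\big)=7\big(x^{n+1}L_{4n+4}-2\big). \]
   Context: $F_n,L_n$ are the Fibonacci and Lucas numbers: $F_0=0$, $F_1=1$, $L_0=2$, $L_1=1$, $W_n=W_{n-1}+W_{n-2}$. *)

(* Defs.v *)
From HB Require Import structures.
From mathcomp Require Import all_boot all_order all_algebra.
From mathcomp Require Import complex.
From mathcomp Require Import Rstruct.
From Stdlib Require Import Reals.
Set Implicit Arguments. Unset Strict Implicit. Unset Printing Implicit Defensive.

Fixpoint fib (n : nat) : nat :=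
  match n with
  | 0 => 0
  | 1 => 1
  | (m.+1 as p).+1 => fib p + fib m
  end.

Fixpoint lucas (n : nat) : nat :=
  match n with
  | 0 => 2
  | 1 => 1
  | (m.+1 as p).+1 => lucas p + lucas m
  end.

Notation Cplx := (complex Rdefinitions.R).

(* Main.v *)
Require Import Defs.
From mathcomp Require Import all_boot all_order all_algebra complex Rstruct.
From mathcomp Require Import ring zify.
Import GRing.Theory.
Local Open Scope ring_scope.

Lemma fl_id (m : nat) :
  (7 * fib m + 3 * lucas m = 2 * fib (m + 4))%N /\
  (15 * fib m + 7 * lucas m = 2 * lucas (m + 4))%N.
Proof.
elim/ltn_ind: m => m IH.
case: m IH => [|[|m]] IH; first by []; first by [].
have [A1 A2] := IH m (leqW (ltnSn m)).
have [B1 B2] := IH m.+1 (ltnSn _).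
rewrite !addnS !addn0 /=.
move: A1 A2 B1 B2; rewrite !addnS !addn0 /= => A1 A2 B1 B2.
split; lia.
Qed.

Lemma step1 (x a b c : Cplx) (n : nat) :
  7%:R * a + 3%:R * b = 2%:R * c ->
  7 * x ^+ n.+1 * a + x ^+ n.+1 * (3 * b + (7 * x - 2) * c) = 7 * x ^+ n.+2 * c.
Proof.
move=> h; have -> : 3 * b = 2%:R * c - 7 * a by rewrite -h; ring.
rewrite !exprS; ring.
Qed.

Lemma step2 (x a b c : Cplx) (n : nat) :
  15%:R * a + 7%:R * b = 2%:R * c ->
  7 * (x ^+ n.+1 * b - 2) + x ^+ n.+1 * (15 * a + (7 * x - 2) * c)
   = 7 * (x ^+ n.+2 * c - 2).
Proof.
move=> h; have -> : 15 * a = 2%:R * c - 7 * b by rewrite -h; ring.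
rewrite !exprS; ring.
Qed.

Lemma castN (p q r s t u : nat) : (p * q + r * s = t * u)%N ->
  p%:R * q%:R + r%:R * s%:R = t%:R * u%:R :> Cplx.
Proof. by move=> h; rewrite -!natrM -natrD h. Qed.

Theorem corollary8 (x : Cplx) (n : nat) :
  \sum_(0 <= k < n.+1) x ^+ k * (3 * (lucas (4 * k))%:R + (7 * x - 2) * (fib (4 * k + 4))%:R)
    = 7 * x ^+ n.+1 * (fib (4 * n + 4))%:R
  /\
  \sum_(0 <= k < n.+1) x ^+ k * (15 * (fib (4 * k))%:R + (7 * x - 2) * (lucas (4 * k + 4))%:R)
    = 7 * (x ^+ n.+1 * (lucas (4 * n + 4))%:R - 2).
Proof.
elim: n => [|n [IH1 IH2]].
  rewrite !big_nat1 /= !expr0 !expr1 !mul1r; split; ring.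
have E : (4 * n.+1 + 4 = 4 * n + 4 + 4)%N by lia.
have [h1 h2] := fl_id (4 * n + 4).
split; rewrite big_nat_recr // E.
  rewrite IH1 (_ : (4 * n.+1 = 4 * n + 4)%N); last by lia.
  apply: step1; exact: (castN _ _ _ _ _ _ h1).
rewrite IH2 (_ : (4 * n.+1 = 4 * n + 4)%N); last by lia.
apply: step2; exact: (castN _ _ _ _ _ _ h2).
Qed.
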